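(* Let $k$ be a field of characteristic zero, let $n\ge 1$ and $R=k[x_1,\ldots,x_n]$. Let $\mathfrak{D}$ be a set of pairwise commuting $k$-derivations of $R$ such that $R$ is $\mathfrak{D}$-simple and $\partial_{x_1},\ldots,\partial_{x_{n-1}}\in\mathfrak{D}$, and assume the Jacobian Conjecture holds in $n$ variables over $k$. Then there exists $d\in\mathfrak{D}$ such that $\{\partial_{x_1},\ldots,\partial_{x_{n-1}},d\}$ is a locally nilpotent commutative basis of the $R$-module $\mathrm{Der}_k(R)$. In particular, $d$ is locally nilpotent.
   Context: $\mathrm{Der}_k(R)$ is the (free) $R$-module of all $k$-derivations of $R$ (i.e. $k$-linear maps satisfying the Leibniz rule). A commutative basis of $\mathrm{Der}_k(R)$ is an $R$-basis consisting of pairwise commuting derivations; it is locally nilpotent if each of its elements $d$ is locally nilpotent, i.e. for every $f\in R$ there is $m\ge 1$ with $d^m(f)=0$. $R$ is $\mathfrak{D}$-simple if its only ideals $I$ with $d(I)\subseteq I$ for all $d\in\mathfrak{D}$ are $0$ and $R$. The Jacobian Conjecture in $n$ variables over $k$ asserts: if $F=(F_1,\ldots,F_n)\in k[x_1,\ldots,x_n]^n$ has Jacobian matrix $(\partial F_i/\partial x_j)$ invertible over $k[x_1,\ldots,x_n]$, then $F$ has a polynomial inverse. *)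

(* Defs.v *)
From HB Require Import structures.
From mathcomp Require Import all_boot all_order all_algebra.
From mathcomp Require Import mpoly.
Set Implicit Arguments. Unset Strict Implicit. Unset Printing Implicit Defensive.
Import Order.TTheory GRing.Theory.
Local Open Scope ring_scope.

(* R = k[x_1,...,x_n] is {mpoly k[n]}; variable x_{i+1} is 'X_i, i : 'I_n. *)

Definition is_kderivation (k : fieldType) (n : nat)
    (f : {mpoly k[n]} -> {mpoly k[n]}) : Prop :=
  (forall (a : k) (p q : {mpoly k[n]}), f (a *: p + q) = a *: f p + f q) /\
  (forall p q : {mpoly k[n]}, f (p * q) = p * f q + f p * q).

Definition locally_nilpotent (k : fieldType) (n : nat)
    (f : {mpoly k[n]} -> {mpoly k[n]}) : Prop :=
  forall p : {mpoly k[n]}, exists m : nat, (0 < m)%N /\ iter m f p = 0.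

Definition is_ideal (k : fieldType) (n : nat) (I : {mpoly k[n]} -> Prop) : Prop :=
  I 0 /\ (forall p q, I p -> I q -> I (p + q)) /\ (forall r p, I p -> I (r * p)).

Definition D_simple (k : fieldType) (n : nat)
    (D : ({mpoly k[n]} -> {mpoly k[n]}) -> Prop) : Prop :=
  forall I : {mpoly k[n]} -> Prop, is_ideal I ->
    (forall d, D d -> forall p, I p -> I (d p)) ->
    (forall p, I p <-> p = 0) \/ (forall p, I p).

Definition commute_maps (k : fieldType) (n : nat)
    (d1 d2 : {mpoly k[n]} -> {mpoly k[n]}) : Prop :=
  forall p, d1 (d2 p) = d2 (d1 p).

Definition is_Der_basis (k : fieldType) (n : nat) (I : finType)
    (b : I -> {mpoly k[n]} -> {mpoly k[n]}) : Prop :=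
  (forall i, is_kderivation (b i)) /\
  (forall delta, is_kderivation delta ->
     exists c : I -> {mpoly k[n]}, forall p, delta p = \sum_(i : I) c i * b i p) /\
  (forall c : I -> {mpoly k[n]},
     (forall p, \sum_(i : I) c i * b i p = 0) -> forall i, c i = 0).

Definition is_LN_comm_Der_basis (k : fieldType) (n : nat) (I : finType)
    (b : I -> {mpoly k[n]} -> {mpoly k[n]}) : Prop :=
  is_Der_basis b /\ (forall i j, commute_maps (b i) (b j)) /\
  (forall i, locally_nilpotent (b i)).

Definition jacobian (k : fieldType) (n : nat) (F : n.-tuple {mpoly k[n]})
  : 'M[{mpoly k[n]}]_n := \matrix_(i < n, j < n) mderiv j (tnth F i).

Definition JacobianConjecture (k : fieldType) (n : nat) : Prop :=
  forall F : n.-tuple {mpoly k[n]},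
    (exists M : 'M[{mpoly k[n]}]_n,
        jacobian F *m M = 1%:M /\ M *m jacobian F = 1%:M) ->
    exists G : n.-tuple {mpoly k[n]},
      forall i : 'I_n, comp_mpoly G (tnth F i) = 'X_i /\
                       comp_mpoly F (tnth G i) = 'X_i.

Definition partials_then (k : fieldType) (n : nat)
    (d : {mpoly k[n]} -> {mpoly k[n]}) (i : 'I_n) : {mpoly k[n]} -> {mpoly k[n]} :=
  if (val i < n.-1)%N then mderiv i else d.

(* Main.v *)
Require Import Defs.
From HB Require Import structures.
From mathcomp Require Import all_boot all_order all_algebra.
From mathcomp Require Import mpoly.
From mathcomp Require Import ring zify.
From Stdlib Require Import Classical.
Import GRing.Theory.
Set Implicit Arguments. Unset Strict Implicit.
Local Open Scope ring_scope.

Lemma kder_add (k : fieldType) (n : nat) (d : {mpoly k[n]} -> {mpoly k[n]}) :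
  is_kderivation d -> forall p q, d (p + q) = d p + d q.
Proof. by move=> hd p q; have := hd.1 1 p q; rewrite !scale1r. Qed.

Lemma kder0 (k : fieldType) (n : nat) (d : {mpoly k[n]} -> {mpoly k[n]}) :
  is_kderivation d -> d 0 = 0.
Proof.
move=> hd; have h := kder_add hd 0 0; rewrite addr0 in h.
by apply: (@addrI _ (d 0)); rewrite addr0 -h.
Qed.

Lemma kderZ (k : fieldType) (n : nat) (d : {mpoly k[n]} -> {mpoly k[n]}) :
  is_kderivation d -> forall c p, d (c *: p) = c *: d p.
Proof. by move=> hd c p; rewrite -[c *: p]addr0 hd.1 kder0 // addr0. Qed.

Lemma kder1 (k : fieldType) (n : nat) (d : {mpoly k[n]} -> {mpoly k[n]}) :
  is_kderivation d -> d 1 = 0.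
Proof.
move=> hd; have h := hd.2 1 1; rewrite !mulr1 mul1r in h.
by apply: (@addrI _ (d 1)); rewrite addr0 -h.
Qed.

Lemma mderiv_kder (k : fieldType) (n : nat) (i : 'I_n) :
  is_kderivation (@mderiv n k i).
Proof.
split; first by move=> a p q; rewrite mderivD mderivZ.
by move=> p q; rewrite mderivM addrC.
Qed.

Lemma mderivXU (k : fieldType) (n : nat) (i j : 'I_n) :
  mderiv i ('X_j : {mpoly k[n]}) = (j == i)%:R.
Proof.
rewrite mderivX mnm1E; case: eqP => [->|_]; last by rewrite scale0r.
have -> : (U_(i) - U_(i) = 0)%MM by apply/mnmP => m; rewrite mnmBE subnn mnm0E.
by rewrite mpolyX0 scale1r.
Qed.

Lemma gen_ind (k : fieldType) (n : nat) (P : {mpoly k[n]} -> Prop) :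
  P 1 -> (forall i, P 'X_i) -> (forall p q, P p -> P q -> P (p * q)) ->
  (forall c p q, P p -> P q -> P (c *: p + q)) -> forall p, P p.
Proof.
move=> P1 PX PM PL.
have P0 : P 0 by rewrite -(addNr 1) -scaleN1r; apply: PL.
have PXm : forall m, P 'X_[m].
  move=> m; rewrite mpolyXE_id; apply: big_ind => // i _.
  elim: (m i) => [|e IH]; first by rewrite expr0.
  by rewrite exprS; apply: PM.
elim/mpolyind => // c m p _ _ Pp; exact: PL.
Qed.

Lemma chain (k : fieldType) (n : nat) (d : {mpoly k[n]} -> {mpoly k[n]}) :
  is_kderivation d -> forall p, d p = \sum_i d 'X_i * mderiv i p.
Proof.
move=> hd; apply: gen_ind.
- rewrite kder1 // big1 // => i _; by rewrite -mpolyC1 mderivC mulr0.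
- move=> j; rewrite (bigD1 j) //= mderivXU eqxx mulr1 big1 ?addr0 // => i.
  by rewrite mderivXU eq_sym => /negbTE ->; rewrite mulr0.
- move=> p q hp hq; rewrite hd.2 hp hq mulr_sumr mulr_suml -big_split /=.
  by apply: eq_bigr => i _; rewrite mderivM; ring.
- move=> c p q hp hq; rewrite hd.1 hp hq scaler_sumr -big_split /=.
  by apply: eq_bigr => i _; rewrite mderivD mderivZ mulrDr scalerAr.
Qed.

Lemma iter_zero (k : fieldType) (n : nat) (d : {mpoly k[n]} -> {mpoly k[n]}) :
  is_kderivation d -> forall m, iter m d 0 = 0.
Proof. by move=> hd; elim=> //= m ->; rewrite kder0. Qed.

Lemma iter_lin (k : fieldType) (n : nat) (d : {mpoly k[n]} -> {mpoly k[n]}) :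
  is_kderivation d -> forall m c p q,
  iter m d (c *: p + q) = c *: iter m d p + iter m d q.
Proof. by move=> hd; elim=> //= m IH c p q; rewrite IH hd.1. Qed.

Lemma iter_add (k : fieldType) (n : nat) (d : {mpoly k[n]} -> {mpoly k[n]}) :
  is_kderivation d -> forall m p q, iter m d (p + q) = iter m d p + iter m d q.
Proof. by move=> hd m p q; rewrite -[p]scale1r iter_lin // !scale1r. Qed.

Lemma iter_prod (k : fieldType) (n : nat) (d : {mpoly k[n]} -> {mpoly k[n]}) :
  is_kderivation d -> forall N a b p q, (a + b <= N)%N ->
  iter a d p = 0 -> iter b d q = 0 -> iter (a + b) d (p * q) = 0.
Proof.
move=> hd; elim=> [|N IH] [|a] [|b] p q hab hp hq;
  try first [by rewrite /= in hp; rewrite hp mul0r iter_zero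
            | by rewrite /= in hq; rewrite hq mulr0 iter_zero].
- lia.
rewrite addnS iterSr hd.2 iter_add //.
rewrite (IH a.+1 b (p) (d q)); first last.
- by rewrite -iterSr.
- by [].
- lia.
rewrite add0r addSnnS (IH a b.+1) //.
- by rewrite -iterSr.
Qed.

Lemma ln_gen (k : fieldType) (n : nat) (d : {mpoly k[n]} -> {mpoly k[n]}) :
  is_kderivation d -> (forall i, exists m, iter m d 'X_i = 0) ->
  forall p, exists m, iter m d p = 0.
Proof.
move=> hd hX; apply: gen_ind => //.
- by exists 1%N; rewrite /= kder1.
- move=> p q [a ha] [b hb]; exists (a + b)%N; exact: (iter_prod hd (leqnn _)).
- move=> c p q [a ha] [b hb]; exists (maxn a b).
  have h : forall r e, iter e d r = 0 -> forall m, (e <= m)%N -> iter m d r = 0.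
    by move=> r e he m hm; rewrite -(subnK hm) iterD he iter_zero.
  by rewrite iter_lin // (h _ _ ha) ?(h _ _ hb) ?leq_maxl ?leq_maxr // scaler0 addr0.
Qed.

Lemma ln_pos (k : fieldType) (n : nat) (d : {mpoly k[n]} -> {mpoly k[n]}) :
  is_kderivation d -> (forall p, exists m, iter m d p = 0) -> locally_nilpotent d.
Proof.
by move=> hd h p; have [m hm] := h p; exists m.+1; rewrite iterS hm kder0.
Qed.

Lemma mderiv_ln0 (k : fieldType) (n : nat) (i : 'I_n) :
  forall p : {mpoly k[n]}, exists m, iter m (mderiv i) p = 0.
Proof.
apply: ln_gen; first exact: mderiv_kder.
move=> j; exists 2%N => /=; rewrite mderivXU; case: (j == i).
  by rewrite -mpolyC1 mderivC.
by rewrite mderiv0.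
Qed.

Theorem corollary2p8 (k : fieldType) (n : nat)
    (D : ({mpoly k[n]} -> {mpoly k[n]}) -> Prop) :
  [pchar k] =i pred0 ->
  (0 < n)%N ->
  (forall d, D d -> is_kderivation d) ->
  (forall d1 d2, D d1 -> D d2 -> commute_maps d1 d2) ->
  D_simple D ->
  (forall i : 'I_n, (val i < n.-1)%N -> D (mderiv i)) ->
  JacobianConjecture k n ->
  exists d, D d /\ is_LN_comm_Der_basis (partials_then d) /\ locally_nilpotent d.
Proof.
move=> _ n0 Dder Dcomm Dsimp Dpart _.
have ln : (n.-1 < n)%N by rewrite ltn_predL.
pose l : 'I_n := Ordinal ln.
have ltl : forall i : 'I_n, (val i < n.-1)%N = (i != l).
  move=> i; rewrite -(inj_eq val_inj) /=; have := ltn_ord i; lia.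
have Dp : forall i, i != l -> D (mderiv i) by move=> i; rewrite -ltl; exact: Dpart.
pose y : {mpoly k[n]} := 'X_l.
have QX : forall d, D d -> forall i j, i != l -> mderiv i (d 'X_j) = 0.
  move=> d Dd i j il; rewrite (Dcomm _ _ (Dp i il) Dd) mderivXU.
  have hd := Dder _ Dd.
  by case: (j == i); rewrite ?mulr1n ?mulr0n ?kder1 ?kder0.
have Qy : forall d, D d -> forall i, i != l -> mderiv i (d y) = 0.
  by move=> d Dd i il; apply: QX.
have chainQ : forall (e : {mpoly k[n]} -> {mpoly k[n]}) f, is_kderivation e ->
    (forall i, i != l -> mderiv i f = 0) -> e f = e y * mderiv l f.
  move=> e f he hf; rewrite (chain he) (bigD1 l) //= big1 ?addr0 // => i il.
  by rewrite hf // mulr0.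
have [d0 [Dd0 a0n]] : exists d0, D d0 /\ d0 y <> 0.
  apply: NNPP => hno.
  have hz : forall d, D d -> d y = 0.
    by move=> d Dd; apply: NNPP => hne; apply: hno; exists d.
  pose J := fun p : {mpoly k[n]} => exists r, p = y * r.
  have [] := Dsimp J.
  - split; first by exists 0; rewrite mulr0.
    split; first by move=> p q [r1 ->] [r2 ->]; exists (r1 + r2); rewrite mulrDr.
    by move=> r p [r1 ->]; exists (r * r1); rewrite mulrCA.
  - move=> d Dd p [r ->]; exists (d r).
    by have hd := Dder _ Dd; rewrite hd.2 hz // mul0r addr0.
  - move=> h; have : y = 0 by apply/h; exists 1; rewrite mulr1.
    move/(congr1 (meval (fun _ => (1 : k)))); rewrite mevalXU meval0 => /eqP.
    by rewrite oner_eq0.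
  - move=> h; have [r hr] := h 1.
    move: hr => /(congr1 (meval (fun _ => (0 : k)))).
    by rewrite mevalM mevalXU meval1 mul0r => /eqP; rewrite oner_eq0.
pose a0 := d0 y.
have hd0 := Dder _ Dd0.
have [v hv] : exists v, 1 = a0 * v.
  pose I := fun p : {mpoly k[n]} => exists r, p = a0 * r.
  have [] := Dsimp I.
  - split; first by exists 0; rewrite mulr0.
    split; first by move=> p q [r1 ->] [r2 ->]; exists (r1 + r2); rewrite mulrDr.
    by move=> r p [r1 ->]; exists (r * r1); rewrite mulrCA.
  - move=> d Dd p [r ->]; exists (d r + mderiv l (d y) * r).
    have hd := Dder _ Dd; rewrite hd.2.
    have -> : d a0 = a0 * mderiv l (d y).
      rewrite /a0 (Dcomm _ _ Dd Dd0) (chainQ d0) //; exact: Qy.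
    by ring.
  - by move=> h; exfalso; apply: a0n; apply/h; exists 1; rewrite mulr1.
  - by move=> h; have [r hr] := h 1; exists r.
have ea0 : forall i, mderiv i a0 = 0.
  have : v * a0 = 1 by rewrite mulrC hv.
  by move/mpoly_intro_unit => /andP[/eqP -> _] i; rewrite mderivC.
have iterC : forall m g, iter m (mderiv l) (a0 * g) = a0 * iter m (mderiv l) g.
  by elim=> //= m IH g; rewrite IH mderivM ea0 mul0r add0r.
have iterQ : forall m f, (forall i, i != l -> mderiv i f = 0) ->
    iter m d0 f = a0 ^+ m * iter m (mderiv l) f.
  elim=> [|m IH] f hf; first by rewrite expr0 mul1r.
  rewrite !iterSr (chainQ d0) // IH.
    by rewrite iterC exprSr mulrA.
  by move=> i il; rewrite mderivM ea0 mul0r add0r mderiv_comm hf // mderiv0 mulr0.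
have lnd0 : locally_nilpotent d0.
  apply: ln_pos => //; apply: ln_gen => // j.
  have [m0 hm] := mderiv_ln0 l (d0 'X_j); exists m0.+1.
  rewrite iterSr iterQ ?hm ?mulr0 // => i il; exact: QX.
have bE : forall i, partials_then d0 i = if i != l then mderiv i else d0.
  by move=> i; rewrite /partials_then ltl.
exists d0; split => //; split => //.
split; [split; [|split] | split].
- move=> i; rewrite bE; case: ifP => _; [exact: mderiv_kder | exact: hd0].
- move=> de hde.
  pose c := fun i => if i != l then de 'X_i - de y * v * d0 'X_i else de y * v.
  exists c => p.
  have e1 : de p = de y * mderiv l p + \sum_(i | i != l) de 'X_i * mderiv i p.
    by rewrite (chain hde p) (bigD1 l).
  have e2 : d0 p = a0 * mderiv l p + \sum_(i | i != l) d0 'X_i * mderiv i p.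
    by rewrite (chain hd0 p) (bigD1 l).
  have e3 : \sum_i c i * partials_then d0 i p =
      de y * v * d0 p + \sum_(i | i != l) c i * partials_then d0 i p.
    by rewrite (bigD1 l) //= bE /c eqxx.
  have e4 : \sum_(i | i != l) c i * partials_then d0 i p =
    \sum_(i | i != l) de 'X_i * mderiv i p -
      de y * v * \sum_(i | i != l) d0 'X_i * mderiv i p.
    rewrite mulr_sumr -sumrB; apply: eq_bigr => i il; rewrite /c il bE il; ring.
  rewrite e1 e3 e4 e2 -[de y * mderiv l p]mulr1 hv; ring.
- move=> c hc i.
  have cl : c l = 0.
    have := hc y; rewrite (bigD1 l) //= bE eqxx /= big1 ?addr0; last first.
      by move=> j jl; rewrite bE jl mderivXU eq_sym (negbTE jl) mulr0.
    move/eqP; rewrite mulf_eq0 => /orP[/eqP //|/eqP h]; exfalso; exact: a0n h.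
  case: (eqVneq i l) => [-> //| il].
  have := hc 'X_i; rewrite (bigD1 l) //= bE eqxx /= cl mul0r add0r.
  rewrite (bigD1 i il) /= bE il mderivXU eqxx mulr1 big1 ?addr0 //.
  by move=> j /andP[jl ji]; rewrite bE jl mderivXU eq_sym (negbTE ji) mulr0.
- move=> i j p; rewrite !bE; case: ifP => il; case: ifP => jl.
  + exact: mderiv_comm.
  + by apply: Dcomm => //; apply: Dp; rewrite il.
  + by apply: Dcomm => //; apply: Dp; rewrite jl.
  + by [].
- move=> i; rewrite bE; case: ifP => _ //.
  by apply: ln_pos; [exact: mderiv_kder | exact: mderiv_ln0].
Qed.
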